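(* Let $n\ge2$, let $A\in\mathbb{Z}^{m\times n}$ have full column rank, and let $b\in\mathbb{Z}^m$ be such that $P=\{x\in\mathbb{R}^n:Ax\le b\}$ is full-dimensional, $P\cap\mathbb{Z}^n=\emptyset$, and each row of $A$ defines a facet of $P$. Then there exists a row $a^\top$ of $A$ such that $w^{a}(P)\le\pi(A)-1$.
   Context: $w^{a}(P)=\max_{x\in P}a^\top x-\min_{y\in P}a^\top y$. The parameter $\pi(A)$ is defined as \[ \pi(A)=\max_{\substack{b'\in\mathbb{Z}^m:\\ P(A,b')\cap\mathbb{Z}^n\neq\emptyset}}\ \max_{x^*\text{ vertex of }P(A,b')}\ \min_{z^*\in P(A,b')\cap\mathbb{Z}^n}\|A(x^*-z^* )\|_\infty, \] where $P(A,b')=\{x\in\mathbb{R}^n:Ax\le b'\}$. *)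

(* Defs.v *)
From HB Require Import structures.
From mathcomp Require Import all_boot all_order all_algebra.
From mathcomp Require Import classical_sets reals.
Set Implicit Arguments. Unset Strict Implicit. Unset Printing Implicit Defensive.
Import Order.TTheory GRing.Theory Num.Theory.
Local Open Scope ring_scope.
Local Open Scope classical_set_scope.

Section Defs.
Variable R : realType.

Definition mxR (m n : nat) (A : 'M[int]_(m, n)) : 'M[R]_(m, n) :=
  map_mx (fun z : int => z%:~R) A.

Definition polyh (m n : nat) (A : 'M[int]_(m, n)) (b : 'cV[int]_m)
  : set 'cV[R]_n :=
  [set x | forall i : 'I_m, (mxR A *m x) i 0 <= (b i 0)%:~R].

Definition integral_pt (n : nat) (x : 'cV[R]_n) : Prop :=
  forall j : 'I_n, x j 0 \is a Num.int.

Definition norm_inf (m : nat) (v : 'cV[R]_m) : R :=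
  \big[Num.max/0]_(i < m) `|v i 0|.

Definition aff_indep_pts (n : nat) (S : set 'cV[R]_n) (k : nat) : Prop :=
  exists v : 'I_k.+1 -> 'cV[R]_n,
    (forall i, S (v i)) /\
    \rank (\matrix_(i < k) (v (lift ord0 i) - v ord0)^T) = k.

Definition dim_eq (n : nat) (S : set 'cV[R]_n) (d : nat) : Prop :=
  aff_indep_pts S d /\ ~ aff_indep_pts S d.+1.

Definition vertex (n : nat) (S : set 'cV[R]_n) (x : 'cV[R]_n) : Prop :=
  S x /\ forall (y z : 'cV[R]_n) (t : R), S y -> S z -> 0 < t -> t < 1 ->
    x = t *: y + (1 - t) *: z -> y = z.

Definition row_face (m n : nat) (A : 'M[int]_(m, n)) (b : 'cV[int]_m)
  (i : 'I_m) : set 'cV[R]_n :=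
  [set x | polyh A b x /\ (mxR A *m x) i 0 = (b i 0)%:~R].

(* w^a(P) <= c, with w^a(P) = max_{x in P} a x - min_{y in P} a y,
   written out for a nonempty P *)
Definition width_le (n : nat) (a : 'rV[R]_n) (S : set 'cV[R]_n) (c : R) : Prop :=
  forall x y, S x -> S y -> (a *m (x - y)) 0 0 <= c.

Definition prox_dist (m n : nat) (A : 'M[int]_(m, n)) (b' : 'cV[int]_m)
  (xs : 'cV[R]_n) : R :=
  inf [set q | exists z, polyh A b' z /\ integral_pt z /\
                         q = norm_inf (mxR A *m (xs - z))].

Definition pi_A (m n : nat) (A : 'M[int]_(m, n)) : R :=
  sup [set p | exists b' : 'cV[int]_m,
         (exists z, polyh A b' z /\ integral_pt z) /\
         exists xs, vertex (polyh A b') xs /\ p = prox_dist A b' xs].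

End Defs.

(* Main.v *)
Require Import Defs.
From HB Require Import structures.
From mathcomp Require Import all_boot all_order all_algebra.
From mathcomp Require Import classical_sets boolp reals.
From mathcomp Require Import ring lra.
Set Implicit Arguments. Unset Strict Implicit. Unset Printing Implicit Defensive.
Import Order.TTheory GRing.Theory Num.Theory.
Local Open Scope ring_scope.
Local Open Scope classical_set_scope.
Local Close Scope classical_set_scope.
Section Gen.
Variable R : realType.

Lemma minstep (I : finType) (u e : I -> R) : (exists j, e j * u j < 0) ->
  exists t, 0 < t /\ (forall j, e j * u j < 0 -> 0 <= (u j + t * e j) * u j) /\
  exists j, e j * u j < 0 /\ u j + t * e j = 0.
Proof.
case=> j0 Hj0.
have Pj0 : j0 \in [pred j | e j * u j < 0] by rewrite inE.
case: (arg_minP (fun j => - u j / e j) Pj0) => j1; move=> H1' Hmin.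
have H1 : e j1 * u j1 < 0 := H1'.
have ej1 : e j1 != 0 by apply/eqP => E; move: H1; rewrite E mul0r ltxx.
exists (- u j1 / e j1); split.
  have -> : - u j1 / e j1 = - (e j1 * u j1) / (e j1 ^+ 2).
    by field.
  by apply: divr_gt0; rewrite ?oppr_gt0 // exprn_even_gt0.
split.
  move=> j Hj; have ej : e j != 0 by apply/eqP => E; move: Hj; rewrite E mul0r ltxx.
  have Hle := Hmin j Hj.
  rewrite mulrDl.
  have : (- u j / e j) * (e j * u j) <= (- u j1 / e j1) * (e j * u j).
    by rewrite ler_wnM2r // ltW.
  have -> : (- u j / e j) * (e j * u j) = - (u j * u j) by field.
  move=> H; rewrite mulrAC -mulrA; lra.
exists j1; split => //; by field.
Qed.
End Gen.

Definition betw {R : realFieldType} (a v : R) := (0 <= v -> 0 <= a <= v) /\ (v <= 0 -> v <= a <= 0).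
Lemma coordD (R : realFieldType) (a q lam fl hp : R) : 0 <= q * a -> (a = 0 -> q = 0) -> 0 < lam ->
  0 <= fl -> fl <= lam -> (- q * a < 0 -> 0 <= (a + lam * - q) * a) ->
  betw hp (a + - lam * q) -> betw (hp + fl * q) a.
Proof.
move=> h1 h2 l0 f0 f1 Ht [b1 b2].
case: (ltgtP a 0) => ha.
- have q0 : q <= 0 by nra.
  case: (ltgtP q 0) => hq; last first.
  + rewrite hq mulr0 addr0 in b1 b2 *; split => hh; [lra|]. have := b2 hh; lra.
  + lra.
  + have := Ht ltac:(nra) => h3.
    have h4 : a + lam * - q <= 0 by nra.
    have := b2 ltac:(lra); split => hh; [lra|]. nra.
- have q0 : 0 <= q by nra.
  case: (ltgtP q 0) => hq.
  + lra.
  + have := Ht ltac:(nra) => h3.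
    have h4 : 0 <= a + lam * - q by nra.
    have := b1 ltac:(lra); split => hh; [|lra]. nra.
  + rewrite hq mulr0 addr0 in b1 b2 *; split => hh; [|lra]. have := b1 hh; lra.
- rewrite ha (h2 ha) mulr0 addr0 in b1 b2 *; split => hh; [have := b1 hh|have := b2 hh]; lra.
Qed.


Section Main.
Variables (R : realType) (m n : nat) (A : 'M[int]_(m, n)).
Local Notation AR := (mxR R A).

Lemma ARE i j : AR i j = (A i j)%:~R.
Proof. by rewrite /mxR mxE. Qed.

Definition kerS (S : {set 'I_m}) (x : 'cV[R]_n) :=
  forall i, i \in S -> (AR *m x) i 0 = 0.

Lemma intker S w : w != 0 -> kerS S w ->
  exists g, integral_pt g /\ g != 0 /\ kerS S g.
Proof.
move=> w0 kw.
pose MQ : 'M[rat]_(m, n) := \matrix_(i, j) if i \in S then (A i j)%:~R else 0.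
have mapMQ : map_mx (@ratr R) MQ = \matrix_(i, j) if i \in S then AR i j else 0.
  apply/matrixP => i j; rewrite !mxE; case: (i \in S); first by rewrite ratr_int.
  by rewrite rmorph0.
have rowS i : i \in S -> row i (map_mx (@ratr R) MQ) = row i AR.
  by move=> iS; apply/rowP => j; rewrite mapMQ !mxE iS.
have Hw : map_mx (@ratr R) MQ *m w = 0.
  apply/matrixP => i k; rewrite (ord1 k) mapMQ mxE.
  case iS: (i \in S).
    rewrite mxE; transitivity ((AR *m w) i 0); last by rewrite kw // mxE.
    by rewrite mxE; apply: eq_bigr => j _; rewrite mxE iS.
  by rewrite mxE big1 // => j _; rewrite !mxE iS mul0r.
have rk : (\rank MQ < n)%N.
  rewrite ltn_neqAle rank_leq_col andbT; apply/eqP => rkn.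
  have rf : row_free ((map_mx (@ratr R) MQ)^T).
    by rewrite /row_free mxrank_tr mxrank_map rkn.
  move/eqP: w0; apply; apply: trmx_inj; rewrite trmx0.
  apply: (row_free_inj rf); rewrite /= mul0mx -trmx_mul Hw trmx0 //.
have K0 : kermx MQ^T != 0.
  by rewrite -mxrank_eq0 mxrank_ker mxrank_tr subn_eq0 -ltnNge.
have [k rk0] : exists k, row k (kermx MQ^T) != 0.
  apply/existsP; apply: contraR K0 => /existsPn H.
  by apply/eqP/row_matrixP => k; rewrite row0; apply/eqP; move: (H k); rewrite negbK.
set r := row k (kermx MQ^T) in rk0.
have rM : r *m MQ^T = 0 by rewrite /r -row_mul mulmx_ker row0.
pose d : rat := \prod_(j < n) (denq (r 0 j))%:~R.
have d0 : d != 0.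
  by rewrite /d prodf_seq_neq0; apply/allP => j _; rewrite intr_eq0 denq_neq0.
pose r' := d *: r.
have r'int j : r' 0 j \is a Num.int.
  rewrite /r' mxE /d (bigD1 j) //= mulrAC [_ * r 0 j]mulrC -numqE.
  by rewrite rpredM ?intr_int // rpred_prod // => i _; rewrite intr_int.
exists (map_mx (@ratr R) r'^T); split.
  move=> j; rewrite mxE [_^T _ _]mxE.
  move: (r'int j); rewrite (intrEfloor (r' 0 j)) => /eqP <-.
  by rewrite ratr_int intr_int.
split.
  by rewrite map_mx_eq0 trmx_eq0 scalemx_eq0 negb_or d0.
move=> i iS.
have rowE (X : 'M[R]_(m, n)) (v : 'cV[R]_n) : (X *m v) i 0 = (row i X *m v) 0 0.
  by rewrite -row_mul [in RHS]mxE.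
rewrite rowE -rowS // -rowE -map_mxM.
have : r' *m MQ^T = 0 by rewrite /r' -scalemxAl rM scaler0.
move/(congr1 trmx); rewrite trmx_mul trmxK trmx0 => ->.
by rewrite map_mx0 mxE.
Qed.


Lemma norm_inf_ge k (v : 'cV[R]_k) i : `|v i 0| <= norm_inf v.
Proof. by rewrite /norm_inf (bigD1 i) //= le_max lexx. Qed.

Lemma norm_inf_ge0 k (v : 'cV[R]_k) : 0 <= norm_inf v.
Proof.
rewrite /norm_inf; apply: (big_ind (fun x => 0 <= x)) => //.
by move=> x y hx hy; rewrite le_max hx.
Qed.

Lemma norm_inf_le k (v : 'cV[R]_k) c : 0 <= c -> (forall i, `|v i 0| <= c) ->
  norm_inf v <= c.
Proof.
move=> c0 H; rewrite /norm_inf; apply: (big_ind (fun x => x <= c)) => //.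
by move=> x y hx hy; rewrite ge_max hx.
Qed.

Definition gsel (S : {set 'I_m}) : 'cV[R]_n :=
  xget 0 (fun g => integral_pt g /\ g != 0 /\ kerS S g).

Definition Gb : R := \big[Num.max/0]_(S : {set 'I_m}) norm_inf (AR *m gsel S).

Lemma Gb_ge S : norm_inf (AR *m gsel S) <= Gb.
Proof. by rewrite /Gb (bigD1 S) //= le_max lexx. Qed.

Lemma Gb_ge0 : 0 <= Gb.
Proof. by apply: le_trans (Gb_ge finset.set0); apply: norm_inf_ge0. Qed.

Lemma mulE (X : 'M[R]_(m, n)) (v : 'cV[R]_n) i :
  (X *m v) i 0 = \sum_j X i j * v j 0.
Proof. by rewrite mxE. Qed.

Lemma ARlin (v w : 'cV[R]_n) (t : R) i :
  (AR *m (v + t *: w)) i 0 = (AR *m v) i 0 + t * (AR *m w) i 0.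
Proof. by rewrite mulmxDr -scalemxAr !mxE. Qed.

Lemma ARopp (w : 'cV[R]_n) i : (AR *m - w) i 0 = - (AR *m w) i 0.
Proof. by rewrite mulmxN [LHS]mxE. Qed.

Lemma ARsub (v w : 'cV[R]_n) i : (AR *m (v - w)) i 0 = (AR *m v) i 0 - (AR *m w) i 0.
Proof. by rewrite mulmxBr -mulmxN [LHS]mxE ARopp. Qed.

Hypothesis rkA : \rank AR = n.

Lemma AR_inj (x : 'cV[R]_n) : AR *m x = 0 -> x = 0.
Proof.
move=> H.
have rf : row_free (AR^T) by rewrite /row_free mxrank_tr rkA.
apply: trmx_inj; rewrite trmx0; apply: (row_free_inj rf).
by rewrite /= mul0mx -trmx_mul H trmx0.
Qed.

Lemma AR_nz (x : 'cV[R]_n) : x != 0 -> exists i, (AR *m x) i 0 != 0.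
Proof.
move=> x0; apply/existsP; apply: contraR x0 => /existsPn H.
apply/eqP/AR_inj/matrixP => i k; rewrite (ord1 k) [RHS]mxE.
by move: (H i); rewrite negbK => /eqP.
Qed.

Definition conf (g y : 'cV[R]_n) := forall i,
  0 <= (AR *m g) i 0 * (AR *m y) i 0 /\ ((AR *m y) i 0 = 0 -> (AR *m g) i 0 = 0).

Definition nz (y : 'cV[R]_n) : {set 'I_m} := [set i | (AR *m y) i 0 != 0]%SET.


Lemma conf_step (u e yv t : R) : 0 < t -> 0 <= u * yv -> (yv = 0 -> u = 0) ->
  (u = 0 -> e = 0) -> (e * u < 0 -> 0 <= (u + t * e) * u) ->
  0 <= (u + t * e) * yv.
Proof.
move=> t0 c1 c2 kd Ht.
case: (eqVneq u 0) => [u0|u0]; first by rewrite u0 (kd u0) mulr0 add0r mul0r.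
have h : 0 <= (u + t * e) * u.
  case: (ltP (e * u) 0) => [/Ht //|h]; rewrite mulrDl -mulrA.
  apply: addr_ge0; first by rewrite -expr2 sqr_ge0.
  by rewrite mulr_ge0 // ltW.
have uu : 0 < u * u by rewrite -expr2 exprn_even_gt0.
have := mulr_ge0 h c1.
have -> : (u + t * e) * u * (u * yv) = ((u + t * e) * yv) * (u * u) by ring.
by rewrite pmulr_lge0.
Qed.

Lemma reduce y : y != 0 -> exists w, w != 0 /\ conf w y /\
  (forall d, (forall i, (AR *m w) i 0 = 0 -> (AR *m d) i 0 = 0) -> exists c, d = c *: w).
Proof.
move=> y0.
suff H : forall k w, (#|nz w| <= k)%N -> w != 0 -> conf w y -> exists w, w != 0 /\ conf w y /\
  (forall d, (forall i, (AR *m w) i 0 = 0 -> (AR *m d) i 0 = 0) -> exists c, d = c *: w).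
  apply: (H #|nz y| y (leqnn _) y0) => i; split; last by [].
  by rewrite -expr2 sqr_ge0.
elim=> [|k IH] w hk w0 cw.
  exfalso; move/negP: w0; apply; apply/eqP/AR_inj/matrixP => i j; rewrite (ord1 j) [RHS]mxE.
  apply/eqP; apply: contraTT hk => hi; rewrite -ltnNge; apply/card_gt0P; exists i.
  by rewrite inE.
case: (pselect (exists d, (forall i, (AR *m w) i 0 = 0 -> (AR *m d) i 0 = 0) /\
   forall c, d <> c *: w)) => [[d [kd npar]]|nod]; last first.
  exists w; split => //; split => // d kd.
  case: (pselect (exists c, d = c *: w)) => // Hn; exfalso; apply: nod; exists d.
  by split => // c Hc; apply: Hn; exists c.
have [d' [kd' [npar' [j0 hj0]]]] : exists d',
    (forall i, (AR *m w) i 0 = 0 -> (AR *m d') i 0 = 0) /\ (forall c, d' <> c *: w) /\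
    exists j, (AR *m d') j 0 * (AR *m w) j 0 < 0.
  have d0 : d != 0 by apply/eqP => d0; apply: (npar 0); rewrite d0 scale0r.
  have [j hj] := AR_nz d0.
  have hwj : (AR *m w) j 0 != 0 by apply: contra hj => /eqP /kd ->.
  case: (ltgtP ((AR *m d) j 0 * (AR *m w) j 0) 0) => hs.
  - by exists d; split => //; split => //; exists j.
  - exists (- d); split; first by move=> i /kd; rewrite ARopp => ->; rewrite oppr0.
    split; first by move=> c Hc; apply: (npar (- c)); rewrite scaleNr -Hc opprK.
    by exists j; rewrite ARopp mulNr oppr_lt0.
  - by move/eqP: hs; rewrite mulf_eq0 (negbTE hj) (negbTE hwj).
have [t [t0 [Ht [j [hj hj0']]]]] := @minstep R _ (fun i => (AR *m w) i 0)
   (fun i => (AR *m d') i 0) (ex_intro _ j0 hj0).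
move: hj hj0' Ht => /= hj hj0' Ht.
have ujn : (AR *m w) j 0 != 0.
  by apply/eqP => u0; move: hj; rewrite u0 mulr0 ltxx.
apply: (IH (w + t *: d')).
- have sub : (nz (w + t *: d') \subset nz w :\ j)%SET.
    apply/fintype.subsetP => i; rewrite !inE ARlin => hi; apply/andP; split.
      by apply/eqP => eij; move: hi; rewrite eij hj0' eqxx.
    by apply: contra hi => /eqP u0; rewrite u0 (kd' i u0) mulr0 addr0.
  have := subset_leq_card sub; move: hk; rewrite (cardsD1 j (nz w)) inE ujn /=.
  by move=> h1 h2; apply: leq_trans h2 _; rewrite -ltnS.
- apply/eqP => h0; apply: (npar' (- t^-1)).
  have e1 : t *: d' = - w by rewrite -(addKr w (t *: d')) h0 addr0.
  have tn : t != 0 by rewrite gt_eqF.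
  by rewrite -[d']scale1r -(mulVf tn) -scalerA e1 scalerN -scaleNr.
- move=> i; have [c1 c2] := cw i; rewrite ARlin; split.
    apply: conf_step => //; first exact: kd'.
    exact: Ht.
  by move=> /c2 u0; rewrite u0 (kd' i u0) mulr0 addr0.
Qed.


Lemma conf_pos (w y : 'cV[R]_n) c : 0 < c -> conf w y -> conf (c *: w) y.
Proof.
move=> c0 cw i; have [c1 c2] := cw i.
rewrite -scalemxAr mxE; split; first by rewrite -mulrA mulr_ge0 // ltW.
by move=> /c2 ->; rewrite mulr0.
Qed.

Lemma elem y : y != 0 -> exists g, integral_pt g /\ g != 0 /\ conf g y /\
  forall i, `|(AR *m g) i 0| <= Gb.
Proof.
move=> y0; have [w [w0 [cw par]]] := reduce y0.
pose Z := [set i | (AR *m w) i 0 == 0]%SET.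
have kw : kerS Z w by move=> i; rewrite inE => /eqP.
have ex : exists g, integral_pt g /\ g != 0 /\ kerS Z g := intker w0 kw.
have [gi [gn gk]] : integral_pt (gsel Z) /\ gsel Z != 0 /\ kerS Z (gsel Z).
  exact: (xgetPex 0 ex).
have [c hc] : exists c, gsel Z = c *: w.
  by apply: par => i h; apply: gk; rewrite inE h.
have bnd i : `|(AR *m gsel Z) i 0| <= Gb := le_trans (norm_inf_ge _ i) (Gb_ge Z).
case: (ltgtP c 0) => hc0.
- exists (- gsel Z); split.
    by move=> j; rewrite mxE rpredN.
  split; first by rewrite oppr_eq0.
  split; first by rewrite hc -scaleNr; apply: conf_pos => //; rewrite oppr_gt0.
  by move=> i; rewrite ARopp normrN.
- exists (gsel Z); split => //; split => //; split => //.
  by rewrite hc; apply: conf_pos.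
- by move: gn; rewrite hc hc0 scale0r eqxx.
Qed.


Lemma AR0 i : (AR *m (0 : 'cV[R]_n)) i 0 = 0.
Proof. by rewrite mulmx0 mxE. Qed.

Lemma decomp k y : (#|nz y| <= k)%N -> exists h, integral_pt h /\
  (forall i, betw ((AR *m h) i 0) ((AR *m y) i 0)) /\
  (forall i, `|(AR *m (y - h)) i 0| <= k%:R * Gb).
Proof.
elim: k y => [|k IH] y hk.
  case: (eqVneq y 0) => [->|y0].
    exists 0; split; first by move=> j; rewrite mxE rpred0.
    split; first by move=> i; rewrite AR0; split => h; rewrite lexx.
    by move=> i; rewrite subr0 AR0 normr0 mul0r.
  exfalso; have [i hi] := AR_nz y0.
  move: hk; rewrite leqn0 => /eqP/cards0_eq/setP/(_ i).
  by rewrite !inE hi.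
case: (eqVneq y 0) => [->|y0].
  exists 0; split; first by move=> j; rewrite mxE rpred0.
  split; first by move=> i; rewrite AR0; split => h; rewrite lexx.
  by move=> i; rewrite subr0 AR0 normr0 mulr_ge0 ?Gb_ge0.
have [g [gi [gn [cg gb]]]] := elem y0.
have [j0 hj0] : exists j, - (AR *m g) j 0 * (AR *m y) j 0 < 0.
  have [j hj] := AR_nz gn; exists j; have [c1 c2] := cg j.
  rewrite mulNr oppr_lt0 lt_def c1 andbT mulf_neq0 //.
  by apply: contra hj => /eqP /c2 ->.
have [lam [l0 [Ht [j1 [hj1 hj1']]]]] := @minstep R _ (fun i => (AR *m y) i 0)
   (fun i => - (AR *m g) i 0) (ex_intro _ j0 hj0).
move: hj1 hj1' Ht => /= hj1 hj1' Ht.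
pose y' := y + (- lam) *: g.
have uj : (AR *m y) j1 0 != 0.
  by apply/eqP => u0; move: hj1; rewrite u0 mulr0 ltxx.
have hk' : (#|nz y'| <= k)%N.
  have sub : (nz y' \subset nz y :\ j1)%SET.
    apply/fintype.subsetP => i; rewrite !inE ARlin => hi; apply/andP; split.
      by apply/eqP => eij; move: hi; rewrite eij mulNr -mulrN hj1' eqxx.
    apply: contra hi => /eqP u0; have [_ c2] := cg i.
    by rewrite u0 (c2 u0) mulr0 addr0.
  have := subset_leq_card sub; move: hk; rewrite (cardsD1 j1 (nz y)) inE uj /=.
  by move=> h1 h2; apply: leq_trans h2 _; rewrite -ltnS.
have [h' [hi' [hb' hn']]] := IH y' hk'.
pose fl : R := (Num.floor lam)%:~R.
have f0 : 0 <= fl by rewrite /fl ler0z floor_ge0 ltW.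
have f1 : fl <= lam by rewrite /fl floor_le.
have f2 : lam < fl + 1 by have := floorD1_gt lam; rewrite rmorphD.
exists (h' + fl *: g); split.
  by move=> j; rewrite !mxE rpredD // rpredM // intr_int.
split.
  move=> i; rewrite ARlin; have [c1 c2] := cg i.
  apply: (coordD (lam := lam)) => //.
    by move=> hh; have := Ht i hh.
  by have := hb' i; rewrite ARlin mulNr.
move=> i.
have -> : (AR *m (y - (h' + fl *: g))) i 0 =
   (AR *m (y' - h')) i 0 + (lam - fl) * (AR *m g) i 0.
  rewrite !ARsub !ARlin; ring.
apply: le_trans (ler_normD _ _) _.
rewrite normrM (ger0_norm (x := lam - fl)) ?subr_ge0 //.
have := hn' i; have := gb i; have := normr_ge0 ((AR *m g) i 0).
rewrite -natr1.
move=> n0 n1 n2; nra.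
Qed.


Lemma prox (b' : 'cV[int]_m) x z0 : polyh (R:=R) A b' x -> polyh (R:=R) A b' z0 ->
  integral_pt z0 -> exists z, polyh (R:=R) A b' z /\ integral_pt z /\
  norm_inf (AR *m (x - z)) <= m%:R * Gb.
Proof.
move=> px pz zi.
have hm : (#|nz (x - z0)| <= m)%N by rewrite -[m in (_ <= m)%N]card_ord max_card.
have [h [hi [hb hn]]] := decomp hm.
exists (z0 + h); split.
  move=> i; rewrite /polyh /= mulmxDr [X in X <= _]mxE.
  have h2 := px i; have h1 := pz i; have [b1 b2] := hb i.
  rewrite ARsub in b1 b2.
  case: (lerP 0 ((AR *m x) i 0 - (AR *m z0) i 0)) => hh.
    have := b1 hh; lra.
  have := b2 (ltW hh); lra.
split; first by move=> j; rewrite mxE rpredD.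
apply: norm_inf_le; first by rewrite mulr_ge0 ?Gb_ge0.
by move=> i; rewrite opprD addrA; apply: hn.
Qed.

Lemma prox_le (b' : 'cV[int]_m) xs : (exists z, polyh (R:=R) A b' z /\ integral_pt z) ->
  polyh (R:=R) A b' xs -> prox_dist A b' xs <= m%:R * Gb.
Proof.
move=> [z0 [pz zi]] px.
have [z [pz' [zi' hz]]] := prox px pz zi.
apply: le_trans hz; rewrite /prox_dist.
have lb : has_lbound (fun q => exists z, polyh (R:=R) A b' z /\ integral_pt z /\
                         q = norm_inf (AR *m (xs - z))).
  by exists 0 => q [z1 [_ [_ ->]]]; apply: norm_inf_ge0.
by apply: (ge_inf lb); exists z.
Qed.

Lemma pi_ge (b' : 'cV[int]_m) xs : (exists z, polyh (R:=R) A b' z /\ integral_pt z) ->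
  vertex (polyh (R:=R) A b') xs -> prox_dist A b' xs <= pi_A R A.
Proof.
move=> ex vx; rewrite /pi_A.
have ub : has_ubound (fun p => exists b' : 'cV[int]_m,
         (exists z, polyh (R:=R) A b' z /\ integral_pt z) /\
         exists xs, vertex (polyh (R:=R) A b') xs /\ p = prox_dist A b' xs).
  exists (m%:R * Gb) => p [b1 [ex1 [x1 [[v1 _] ->]]]].
  exact: prox_le.
apply: (ub_le_sup ub); exists b'; split => //; exists xs; split => //.
Qed.


Lemma tight_vertex (b' : 'cV[int]_m) x : polyh (R:=R) A b' x ->
  (forall d : 'cV[R]_n, (forall j, (AR *m x) j 0 = (b' j 0)%:~R -> (AR *m d) j 0 = 0) -> d = 0) ->
  vertex (polyh (R:=R) A b') x.
Proof.
move=> px nod; split => // y z t py pz t0 t1 hx.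
apply/eqP; rewrite -subr_eq0; apply/eqP/nod => j tj.
rewrite ARsub.
have hy := py j; have hz := pz j.
have hxj : (AR *m x) j 0 = t * (AR *m y) j 0 + (1 - t) * (AR *m z) j 0.
  by rewrite hx mulmxDr -!scalemxAr [LHS]mxE !mxE.
rewrite tj in hxj.
have e1 : t * ((b' j 0)%:~R - (AR *m y) j 0) + (1 - t) * ((b' j 0)%:~R - (AR *m z) j 0) = 0.
  by rewrite hxj; ring.
have g1 : 0 <= t * ((b' j 0)%:~R - (AR *m y) j 0) by apply: mulr_ge0; [exact: ltW|rewrite subr_ge0].
have g2 : 0 <= (1 - t) * ((b' j 0)%:~R - (AR *m z) j 0) by apply: mulr_ge0; rewrite subr_ge0 // ltW.
have z1 : t * ((b' j 0)%:~R - (AR *m y) j 0) = 0 by lra.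
have z2 : (1 - t) * ((b' j 0)%:~R - (AR *m z) j 0) = 0 by lra.
move/eqP: z1; rewrite mulf_eq0 gt_eqF //= subr_eq0 => /eqP <-.
move/eqP: z2; rewrite mulf_eq0 subr_eq0 (gt_eqF t1) /= subr_eq0 => /eqP <-.
by rewrite subrr.
Qed.

Lemma coordP (u e t : R) : 0 <= u -> 0 < t -> (u = 0 -> e = 0) ->
  (e * u < 0 -> 0 <= (u + t * e) * u) -> 0 <= u + t * e.
Proof.
move=> u0 t0 h1 h2.
case: (eqVneq u 0) => [uz|uz]; first by rewrite uz (h1 uz) mulr0 addr0.
have up : 0 < u by rewrite lt_def uz u0.
case: (ltP (e * u) 0) => he.
  have := h2 he; rewrite pmulr_lge0 //.
have : 0 <= e by rewrite -(pmulr_lge0 _ up).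
nra.
Qed.

Section Push.
Variable i0 : 'I_m.
Hypothesis Hi : forall d : 'cV[R]_n, (forall j, (AR *m d) j 0 <= 0) -> (AR *m d) i0 0 = 0.

Lemma dir (d : 'cV[R]_n) : d != 0 -> exists d', (d' = d \/ d' = - d) /\ (AR *m d') i0 0 <= 0 /\
  exists j, 0 < (AR *m d') j 0.
Proof.
move=> d0.
have pos (d1 : 'cV[R]_n) : (AR *m d1) i0 0 < 0 -> exists j, 0 < (AR *m d1) j 0.
  move=> hl; case: (pselect (exists j, 0 < (AR *m d1) j 0)) => // nj; exfalso.
  have : (AR *m d1) i0 0 = 0.
    apply: Hi => j; rewrite leNgt; apply/negP => hj; apply: nj; by exists j.
  by move=> e; move: hl; rewrite e ltxx.
case: (ltgtP ((AR *m d) i0 0) 0) => hd.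
- by exists d; split; [left|split; [apply: ltW|apply: pos]].
- exists (- d); split; first by right.
  by rewrite ARopp; split; [rewrite oppr_le0 ltW | apply: pos; rewrite ARopp oppr_lt0].
- case: (pselect (exists j, 0 < (AR *m d) j 0)) => [ex|nj].
    by exists d; split; [left|rewrite hd].
  have [j hj] := AR_nz d0.
  exists (- d); split; first by right.
  rewrite ARopp hd oppr0; split => //; exists j; rewrite ARopp oppr_gt0.
  rewrite lt_neqAle hj /= leNgt; apply/negP => h; apply: nj; by exists j.
Qed.

Definition ntight (b' : 'cV[int]_m) (x : 'cV[R]_n) : {set 'I_m} :=
  [set j | (AR *m x) j 0 != (b' j 0)%:~R]%SET.

Lemma push (b' : 'cV[int]_m) x : polyh (R:=R) A b' x ->
  exists xs, vertex (polyh (R:=R) A b') xs /\ (AR *m xs) i0 0 <= (AR *m x) i0 0.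
Proof.
move=> px0.
suff H : forall k x, (#|ntight b' x| <= k)%N -> polyh (R:=R) A b' x ->
  exists xs, vertex (polyh (R:=R) A b') xs /\ (AR *m xs) i0 0 <= (AR *m x) i0 0.
  by apply: (H m) => //; rewrite -[m in (_ <= m)%N]card_ord max_card.
clear px0 x.
elim=> [|k IH] x hk px;
  (case: (pselect (exists d : 'cV[R]_n, d != 0 /\ forall j, (AR *m x) j 0 = (b' j 0)%:~R ->
     (AR *m d) j 0 = 0)) => [[d [d0 kd]]|nod];
   [|exists x; split => //; apply: tight_vertex => // d kd;
     case: (eqVneq d 0) => // dn; exfalso; apply: nod; by exists d]).
all: have [d' [hd' [di0 [j0 hj0]]]] := dir d0.
all: have kd' : forall j, (AR *m x) j 0 = (b' j 0)%:~R -> (AR *m d') j 0 = 0 by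
  move=> j /kd; case: hd' => ->; rewrite ?ARopp => // ->; rewrite oppr0.
all: have u0 j : 0 <= (b' j 0)%:~R - (AR *m x) j 0 by rewrite subr_ge0; apply: px.
all: have hj0' : - (AR *m d') j0 0 * ((b' j0 0)%:~R - (AR *m x) j0 0) < 0.
all: try (rewrite mulNr oppr_lt0 mulr_gt0 // lt_def u0 andbT subr_eq0;
  apply/eqP => e; move: hj0; rewrite (kd' j0 (esym e)) ltxx //).
all: have [t [t0 [Ht [j1 [hj1 hj1']]]]] := @minstep R _
   (fun j => (b' j 0)%:~R - (AR *m x) j 0) (fun j => - (AR *m d') j 0) (ex_intro _ j0 hj0').
all: move: hj1 hj1' Ht => /= hj1 hj1' Ht.
all: have j1n : j1 \in ntight b' x by
  rewrite inE; apply/eqP => e; move: hj1; rewrite e subrr mulr0 ltxx.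
  by move: hk; rewrite leqn0 => /eqP/cards0_eq/setP/(_ j1); rewrite j1n inE.
have kz j : (b' j 0)%:~R - (AR *m x) j 0 = 0 -> - (AR *m d') j 0 = 0.
  by move=> /eqP; rewrite subr_eq0 => /eqP e; rewrite (kd' j (esym e)) oppr0.
have px' : polyh (R:=R) A b' (x + t *: d').
  move=> j; rewrite /= ARlin.
  have := coordP (u0 j) t0 (kz j) (Ht j); lra.
have sub : (ntight b' (x + t *: d') \subset ntight b' x :\ j1)%SET.
  apply/fintype.subsetP => i; rewrite !inE ARlin => hi; apply/andP; split.
    apply/eqP => eij; move: hi; rewrite eij.
    have -> : (AR *m x) j1 0 + t * (AR *m d') j1 0 = (b' j1 0)%:~R.
      by move: hj1'; rewrite mulrN; lra.
    by rewrite eqxx.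
  apply: contra hi => /eqP e; rewrite (kd' i e) mulr0 addr0 e //.
have hk' : (#|ntight b' (x + t *: d')| <= k)%N.
  have := subset_leq_card sub; move: hk; rewrite (cardsD1 j1 (ntight b' x)) j1n /=.
  by move=> h1 h2; apply: leq_trans h2 _; rewrite -ltnS.
have [xs [vx hx]] := IH _ hk' px'.
exists xs; split => //; move: hx; rewrite ARlin.
have : t * (AR *m d') i0 0 <= 0 by rewrite pmulr_rle0.
lra.
Qed.

End Push.


Definition Tset : {set 'I_m} := [set i | `[< forall d : 'cV[R]_n,
   (forall j, (AR *m d) j 0 <= 0) -> (AR *m d) i 0 = 0 >] ]%SET.

Definition bS (b : 'cV[int]_m) (L : int) (S : {set 'I_m}) : 'cV[int]_m :=
  \col_i (b i 0 + L *+ (i \in S)).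

Lemma bSE b L S k : ((bS b L S) k 0)%:~R = (b k 0)%:~R + (if k \in S then L%:~R else 0) :> R.
Proof. by rewrite mxE; case: (k \in S); rewrite /= ?mulr1n ?mulr0n ?addr0 // rmorphD. Qed.

Lemma relax_T (b : 'cV[int]_m) x0 : polyh (R:=R) A b x0 ->
  exists L : int, 0 <= L /\ exists z, polyh (R:=R) A (bS b L Tset) z /\ integral_pt z.
Proof.
move=> px0.
pose P j (y : 'cV[R]_n) := (forall k, (AR *m y) k 0 <= 0) /\ (j \notin Tset -> (AR *m y) j 0 != 0).
pose yj j := xget 0 (P j).
have hy j : P j (yj j).
  apply: xgetPex.
  case: (pselect (exists d : 'cV[R]_n, (forall k, (AR *m d) k 0 <= 0) /\ (AR *m d) j 0 != 0)).
    by move=> [d [d1 d2]]; exists d; split.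
  move=> nex; exists 0; split; first by move=> k; rewrite AR0.
  move/negP => jT; exfalso; apply: jT; rewrite inE; apply/asboolP => d hd.
  by case: (eqVneq ((AR *m d) j 0) 0) => // ne; exfalso; apply: nex; exists d.
pose ys := \sum_j yj j.
have ysE k : (AR *m ys) k 0 = \sum_j (AR *m yj j) k 0 by rewrite mulmx_sumr summxE.
have ysle k : (AR *m ys) k 0 <= 0 by rewrite ysE sumr_le0 // => j _; case: (hy j).
have ysT k : k \in Tset -> (AR *m ys) k 0 = 0.
  by rewrite inE => /asboolP; apply.
have ysN k : k \notin Tset -> (AR *m ys) k 0 < 0.
  move=> kT; rewrite ysE (bigD1 k) //=.
  have h1 : (AR *m yj k) k 0 < 0 by case: (hy k) => h1 h2; rewrite lt_neqAle h1 h2.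
  have h2 : \sum_(j | j != k) (AR *m yj j) k 0 <= 0 by rewrite sumr_le0 // => j _; case: (hy j).
  lra.
pose c k := \sum_j `|AR k j|.
have c0 k : 0 <= c k by rewrite sumr_ge0.
pose t := \sum_(k | k \notin Tset) c k / (- (AR *m ys) k 0).
have tk k : k \notin Tset -> c k <= t * (- (AR *m ys) k 0).
  move=> kT; have sp : 0 < - (AR *m ys) k 0 by rewrite oppr_gt0 ysN.
  rewrite -ler_pdivrMr // /t (bigD1 k) //= lerDl sumr_ge0 // => j /andP [jT _].
  by rewrite divr_ge0 // oppr_ge0 ltW // ysN.
pose q := x0 + t *: ys.
pose p : 'cV[R]_n := \col_j (Num.floor (q j 0))%:~R.
pose L := Num.ceil (\sum_k c k).
have cL k : c k <= L%:~R.
  apply: le_trans (ceil_ge _); rewrite (bigD1 k) //= lerDl sumr_ge0 //.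
have pq k : (AR *m p) k 0 <= (AR *m q) k 0 + c k.
  rewrite -lerBlDl -ARsub mulE /c; apply: ler_sum => j _.
  rewrite !mxE; set v := (x0 j 0 + t * ys j 0).
  have h2 := floor_le v; have h1 := floorD1_gt v; rewrite rmorphD /= in h1.
  apply: le_trans (ler_norm _) _; rewrite normrM ler_piMr //.
  rewrite ler0_norm ?subr_le0 //; lra.
exists L; split.
  rewrite -(ler0z R); apply: le_trans (ceil_ge _); exact: sumr_ge0.
exists p; split; last by move=> j; rewrite mxE intr_int.
move=> k; rewrite bSE; have := pq k; rewrite /q ARlin; have := px0 k.
case: ifP => kT.
  rewrite (ysT k kT) mulr0 addr0; have := cL k; lra.
have := tk k (negbT kT); lra.
Qed.


Definition lfree (b : 'cV[int]_m) := forall z, polyh (R:=R) A b z -> ~ integral_pt z.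

Lemma chain b L (s : seq 'I_m) S0 : lfree (bS b L S0) ->
  ~ lfree (bS b L (S0 :|: [set x in s])%SET) ->
  exists S i, i \in s /\ lfree (bS b L S) /\ ~ lfree (bS b L (S :|: [set i])%SET).
Proof.
elim: s S0 => [|i s IH] S0 h0 h1.
  exfalso; apply: h1.
  by have -> : (S0 :|: [set x in [::]] = S0)%SET by apply/setP => x; rewrite !inE orbF.
case: (pselect (lfree (bS b L (S0 :|: [set i])%SET))) => hi; last first.
  by exists S0, i; split; rewrite ?mem_head.
have h2 : ~ lfree (bS b L ((S0 :|: [set i]) :|: [set x in s])%SET).
  have -> : ((S0 :|: [set i]) :|: [set x in s] = S0 :|: [set x in i :: s])%SET.
    by apply/setP => x; rewrite !inE orbA.
  exact: h1.
have [S [i' [hs rest]]] := IH _ hi h2.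
by exists S, i'; split => //; rewrite inE hs orbT.
Qed.

Lemma AR_int z i : integral_pt z -> (AR *m z) i 0 \is a Num.int.
Proof.
move=> zi; rewrite mulE rpred_sum // => j _.
by rewrite rpredM // ARE intr_int.
Qed.

Lemma rowmulE (X : 'M[R]_(m, n)) (v : 'cV[R]_n) i : (row i X *m v) 0 0 = (X *m v) i 0.
Proof. by rewrite -row_mul [in LHS]mxE. Qed.

Lemma main_sec (b : 'cV[int]_m) x0 : polyh (R:=R) A b x0 -> lfree b ->
  exists i : 'I_m, width_le (row i AR) (polyh (R:=R) A b) (pi_A R A - 1).
Proof.
move=> px0 lf.
have [L [L0 [z [pz iz]]]] := relax_T px0.
have b0 : bS b L finset.set0 = b.
  by apply/matrixP => k l; rewrite (ord1 l) mxE inE mulr0n addr0.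
have [S [i [iT [lfS nlf]]]] : exists S i, i \in enum Tset /\ lfree (bS b L S) /\
    ~ lfree (bS b L (S :|: [set i])%SET).
  apply: (chain (S0 := finset.set0)); first by rewrite b0.
  have -> : (finset.set0 :|: [set x in enum Tset] = Tset)%SET.
    by apply/setP => x; rewrite finset.in_setU finset.in_set0 /= finset.in_set mem_enum.
  by move=> h; apply: (h z).
rewrite mem_enum in iT.
have iS : i \notin S.
  apply/negP => iS; apply: nlf.
  have -> : (S :|: [set i] = S)%SET.
    by apply/setP => x; rewrite !inE; case: (eqVneq x i) => [->|]; rewrite ?iS ?orbF ?orbT.
  exact: lfS.
set b' := bS b L (S :|: [set i])%SET.
have [z1 [pz1 iz1]] : exists z, polyh (R:=R) A b' z /\ integral_pt z.
  case: (pselect (exists z, polyh (R:=R) A b' z /\ integral_pt z)) => // nex.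
  by exfalso; apply: nlf => z2 p2 i2; apply: nex; exists z2.
have claim z2 : polyh (R:=R) A b' z2 -> integral_pt z2 -> (b i 0)%:~R + 1 <= (AR *m z2) i 0.
  move=> p2 i2; rewrite leNgt; apply/negP => hlt.
  have hle : (AR *m z2) i 0 <= (b i 0)%:~R.
    have hi := AR_int i i2; rewrite -(floorK hi) in hlt *.
    have e1 : ((b i 0) + 1)%:~R = (b i 0)%:~R + 1 :> R by rewrite rmorphD /= rmorph1.
    by move: hlt; rewrite -e1 ltr_int ler_int ltzD1.
  apply: (lfS z2) => // k.
  have := p2 k; rewrite /b' !bSE !inE.
  case: (eqVneq k i) => [->|ki] /=; first by rewrite (negbTE iS) addr0 => _.
  by rewrite orbF.
have bb' y : polyh (R:=R) A b y -> polyh (R:=R) A b' y.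
  move=> py k; have := py k; rewrite /b' bSE; case: ifP => _; last by rewrite addr0.
  by rewrite -(ler0z R) in L0; lra.
have Hi : forall d : 'cV[R]_n, (forall j, (AR *m d) j 0 <= 0) -> (AR *m d) i 0 = 0.
  by move: iT; rewrite inE => /asboolP.
exists i; move=> x y px py.
rewrite rowmulE ARsub.
have [xs [vx hxs]] := push Hi (bb' _ py).
have hpi := pi_ge (ex_intro _ z1 (conj pz1 iz1)) vx.
have hpd : (b i 0)%:~R + 1 - (AR *m xs) i 0 <= prox_dist A b' xs.
  apply: lb_le_inf.
    by exists (norm_inf (AR *m (xs - z1))); exists z1.
  move=> q [z2 [p2 [i2 ->]]].
  have h1 := claim z2 p2 i2; have := norm_inf_ge (AR *m (xs - z2)) i; rewrite ARsub.
  have h : (AR *m z2) i 0 - (AR *m xs) i 0 <= `|(AR *m xs) i 0 - (AR *m z2) i 0|.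
    by rewrite -normrN opprB ler_norm.
  lra.
have := px i; lra.
Qed.

End Main.

Local Open Scope classical_set_scope.
Unset Implicit Arguments.

Theorem lemma9 (R : realType) (m n : nat) (A : 'M[int]_(m, n))
  (b : 'cV[int]_m) :
  (2 <= n)%N ->
  \rank (mxR R A) = n ->
  dim_eq (polyh (R:=R) A b) n ->
  (forall x, polyh (R:=R) A b x -> ~ integral_pt x) ->
  (forall i : 'I_m, dim_eq (row_face (R:=R) A b i) n.-1) ->
  exists i : 'I_m,
    width_le (row i (mxR R A)) (polyh (R:=R) A b) (pi_A R A - 1).
Proof.
move=> _ rk [[v [hv _]] _] lf _.
exact: (main_sec rk (hv ord0) lf).
Qed.
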